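(* Let $H$ be the graph consisting of three vertex-disjoint copies of $K_{4,4}$. For every coloring of the edges of $H$ with two colors, there exist two vertex-disjoint monochromatic cycles of the same color, each chordless in the subgraph formed by the edges of that color, and these two cycles lie in different copies of $K_{4,4}$. *)

(* Defs.v *)
From mathcomp Require Import all_boot.
Set Implicit Arguments. Unset Strict Implicit. Unset Printing Implicit Defensive.

(* Vertices of H = 3 disjoint copies of K_{4,4}:
   (c, side, i) = vertex i (of 4) on side [side] of copy c (of 3). *)
Definition V := ('I_3 * bool * 'I_4)%type.

Definition copy_of (v : V) : 'I_3 := v.1.1.
Definition side_of (v : V) : bool := v.1.2.
Definition idx_of (v : V) : 'I_4 := v.2.

(* A 2-colouring of the edges of H: the edge of copy c between the
   left vertex i (side false) and right vertex j (side true) gets colour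
   col c i j. *)
Definition coloring := 'I_3 -> 'I_4 -> 'I_4 -> bool.

Definition H_adj (u v : V) : bool :=
  (copy_of u == copy_of v) && (side_of u != side_of v).

(* colour of the pair {u,v} (meaningful only when H_adj u v) *)
Definition edge_color (col : coloring) (u v : V) : bool :=
  if side_of u then col (copy_of u) (idx_of v) (idx_of u)
  else col (copy_of u) (idx_of u) (idx_of v).

Definition adjc (col : coloring) (k : bool) : rel V :=
  fun u v => H_adj u v && (edge_color col u v == k).

Definition is_cycle (e : rel V) (s : seq V) : Prop :=
  2 < size s /\ uniq s /\ cycle e s.

Definition vdef : V := (ord0, false, ord0).

Definition chordless (e : rel V) (s : seq V) : Prop :=
  forall i j, i < size s -> j < size s ->
    e (nth vdef s i) (nth vdef s j) ->
    j = i.+1 %% size s \/ i = j.+1 %% size s.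

(* Main.v *)
Require Import Defs.
From mathcomp Require Import all_boot.
From mathcomp Require Import zify.
From Stdlib Require Import FunctionalExtensionality.

Definition W := (bool * 'I_4)%type.
Definition o0 : 'I_4 := @Ordinal 4 0 isT.
Definition o1 : 'I_4 := @Ordinal 4 1 isT.
Definition o2 : 'I_4 := @Ordinal 4 2 isT.
Definition o3 : 'I_4 := @Ordinal 4 3 isT.
Definition w0 : W := (false, o0).

Definition eW (g : 'I_4 -> 'I_4 -> bool) (k : bool) : rel W :=
  fun a b => (a.1 != b.1) && ((if a.1 then g b.2 a.2 else g a.2 b.2) == k).

Definition chordlessb (e : rel W) (s : seq W) : bool :=
  all (fun i => all (fun j => e (nth w0 s i) (nth w0 s j) ==>
     ((j == i.+1 %% size s) || (i == j.+1 %% size s))) (iota 0 (size s))) (iota 0 (size s)).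

Fixpoint pathL (e : rel W) (x : W) (p : seq W) : bool :=
  if p is y :: p' then (if e x y then pathL e y p' else false) else true.

Lemma pathLE e x p : pathL e x p = path e x p.
Proof. by elim: p x => //= y p IH x; rewrite IH; case: (e x y). Qed.

Definition cycleL (e : rel W) (t : seq W) : bool :=
  if t is x :: t' then pathL e x (rcons t' x) else true.

Lemma cycleLE e t : cycleL e t = cycle e t.
Proof. by case: t => //= x t; rewrite pathLE. Qed.

Definition okW (e : rel W) (t : seq W) : bool :=
  if cycleL e t then if 2 < size t then if uniq t then chordlessb e t else false else false else false.

Fixpoint hasL (p : seq W -> bool) (s : seq (seq W)) : bool :=
  if s is x :: s' then (if p x then true else hasL p s') else false.

Lemma hasLE p s : hasL p s = has p s.
Proof. by elim: s => //= x s ->; case: (p x). Qed.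
Definition cands : seq (seq W) := [::
[:: (false,o0); (true,o0); (false,o1); (true,o1)];
[:: (false,o0); (true,o0); (false,o1); (true,o2)];
[:: (false,o0); (true,o0); (false,o1); (true,o3)];
[:: (false,o0); (true,o1); (false,o1); (true,o2)];
[:: (false,o0); (true,o1); (false,o1); (true,o3)];
[:: (false,o0); (true,o2); (false,o1); (true,o3)];
[:: (false,o0); (true,o0); (false,o2); (true,o1)];
[:: (false,o0); (true,o0); (false,o2); (true,o2)];
[:: (false,o0); (true,o0); (false,o2); (true,o3)];
[:: (false,o0); (true,o1); (false,o2); (true,o2)];
[:: (false,o0); (true,o1); (false,o2); (true,o3)];
[:: (false,o0); (true,o2); (false,o2); (true,o3)];
[:: (false,o0); (true,o0); (false,o3); (true,o1)];
[:: (false,o0); (true,o0); (false,o3); (true,o2)];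
[:: (false,o0); (true,o0); (false,o3); (true,o3)];
[:: (false,o0); (true,o1); (false,o3); (true,o2)];
[:: (false,o0); (true,o1); (false,o3); (true,o3)];
[:: (false,o0); (true,o2); (false,o3); (true,o3)];
[:: (false,o1); (true,o0); (false,o2); (true,o1)];
[:: (false,o1); (true,o0); (false,o2); (true,o2)];
[:: (false,o1); (true,o0); (false,o2); (true,o3)];
[:: (false,o1); (true,o1); (false,o2); (true,o2)];
[:: (false,o1); (true,o1); (false,o2); (true,o3)];
[:: (false,o1); (true,o2); (false,o2); (true,o3)];
[:: (false,o1); (true,o0); (false,o3); (true,o1)];
[:: (false,o1); (true,o0); (false,o3); (true,o2)];
[:: (false,o1); (true,o0); (false,o3); (true,o3)];
[:: (false,o1); (true,o1); (false,o3); (true,o2)];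
[:: (false,o1); (true,o1); (false,o3); (true,o3)];
[:: (false,o1); (true,o2); (false,o3); (true,o3)];
[:: (false,o2); (true,o0); (false,o3); (true,o1)];
[:: (false,o2); (true,o0); (false,o3); (true,o2)];
[:: (false,o2); (true,o0); (false,o3); (true,o3)];
[:: (false,o2); (true,o1); (false,o3); (true,o2)];
[:: (false,o2); (true,o1); (false,o3); (true,o3)];
[:: (false,o2); (true,o2); (false,o3); (true,o3)];
[:: (false,o0); (true,o0); (false,o1); (true,o1); (false,o2); (true,o2)];
[:: (false,o0); (true,o0); (false,o1); (true,o1); (false,o2); (true,o3)];
[:: (false,o0); (true,o0); (false,o1); (true,o2); (false,o2); (true,o1)];
[:: (false,o0); (true,o0); (false,o1); (true,o2); (false,o2); (true,o3)];
[:: (false,o0); (true,o0); (false,o1); (true,o3); (false,o2); (true,o1)];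
[:: (false,o0); (true,o0); (false,o1); (true,o3); (false,o2); (true,o2)];
[:: (false,o0); (true,o1); (false,o1); (true,o0); (false,o2); (true,o2)];
[:: (false,o0); (true,o1); (false,o1); (true,o0); (false,o2); (true,o3)];
[:: (false,o0); (true,o1); (false,o1); (true,o2); (false,o2); (true,o0)];
[:: (false,o0); (true,o1); (false,o1); (true,o2); (false,o2); (true,o3)];
[:: (false,o0); (true,o1); (false,o1); (true,o3); (false,o2); (true,o0)];
[:: (false,o0); (true,o1); (false,o1); (true,o3); (false,o2); (true,o2)];
[:: (false,o0); (true,o2); (false,o1); (true,o0); (false,o2); (true,o1)];
[:: (false,o0); (true,o2); (false,o1); (true,o0); (false,o2); (true,o3)];
[:: (false,o0); (true,o2); (false,o1); (true,o1); (false,o2); (true,o0)];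
[:: (false,o0); (true,o2); (false,o1); (true,o1); (false,o2); (true,o3)];
[:: (false,o0); (true,o2); (false,o1); (true,o3); (false,o2); (true,o0)];
[:: (false,o0); (true,o2); (false,o1); (true,o3); (false,o2); (true,o1)];
[:: (false,o0); (true,o3); (false,o1); (true,o0); (false,o2); (true,o1)];
[:: (false,o0); (true,o3); (false,o1); (true,o0); (false,o2); (true,o2)];
[:: (false,o0); (true,o3); (false,o1); (true,o1); (false,o2); (true,o0)];
[:: (false,o0); (true,o3); (false,o1); (true,o1); (false,o2); (true,o2)];
[:: (false,o0); (true,o3); (false,o1); (true,o2); (false,o2); (true,o0)];
[:: (false,o0); (true,o3); (false,o1); (true,o2); (false,o2); (true,o1)];
[:: (false,o0); (true,o0); (false,o1); (true,o1); (false,o3); (true,o2)];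
[:: (false,o0); (true,o0); (false,o1); (true,o1); (false,o3); (true,o3)];
[:: (false,o0); (true,o0); (false,o1); (true,o2); (false,o3); (true,o1)];
[:: (false,o0); (true,o0); (false,o1); (true,o2); (false,o3); (true,o3)];
[:: (false,o0); (true,o0); (false,o1); (true,o3); (false,o3); (true,o1)];
[:: (false,o0); (true,o0); (false,o1); (true,o3); (false,o3); (true,o2)];
[:: (false,o0); (true,o1); (false,o1); (true,o0); (false,o3); (true,o2)];
[:: (false,o0); (true,o1); (false,o1); (true,o0); (false,o3); (true,o3)];
[:: (false,o0); (true,o1); (false,o1); (true,o2); (false,o3); (true,o0)];
[:: (false,o0); (true,o1); (false,o1); (true,o2); (false,o3); (true,o3)];
[:: (false,o0); (true,o1); (false,o1); (true,o3); (false,o3); (true,o0)];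
[:: (false,o0); (true,o1); (false,o1); (true,o3); (false,o3); (true,o2)];
[:: (false,o0); (true,o2); (false,o1); (true,o0); (false,o3); (true,o1)];
[:: (false,o0); (true,o2); (false,o1); (true,o0); (false,o3); (true,o3)];
[:: (false,o0); (true,o2); (false,o1); (true,o1); (false,o3); (true,o0)];
[:: (false,o0); (true,o2); (false,o1); (true,o1); (false,o3); (true,o3)];
[:: (false,o0); (true,o2); (false,o1); (true,o3); (false,o3); (true,o0)];
[:: (false,o0); (true,o2); (false,o1); (true,o3); (false,o3); (true,o1)];
[:: (false,o0); (true,o3); (false,o1); (true,o0); (false,o3); (true,o1)];
[:: (false,o0); (true,o3); (false,o1); (true,o0); (false,o3); (true,o2)];
[:: (false,o0); (true,o3); (false,o1); (true,o1); (false,o3); (true,o0)];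
[:: (false,o0); (true,o3); (false,o1); (true,o1); (false,o3); (true,o2)];
[:: (false,o0); (true,o3); (false,o1); (true,o2); (false,o3); (true,o0)];
[:: (false,o0); (true,o3); (false,o1); (true,o2); (false,o3); (true,o1)];
[:: (false,o0); (true,o0); (false,o2); (true,o1); (false,o3); (true,o2)];
[:: (false,o0); (true,o0); (false,o2); (true,o1); (false,o3); (true,o3)];
[:: (false,o0); (true,o0); (false,o2); (true,o2); (false,o3); (true,o1)];
[:: (false,o0); (true,o0); (false,o2); (true,o2); (false,o3); (true,o3)];
[:: (false,o0); (true,o0); (false,o2); (true,o3); (false,o3); (true,o1)];
[:: (false,o0); (true,o0); (false,o2); (true,o3); (false,o3); (true,o2)];
[:: (false,o0); (true,o1); (false,o2); (true,o0); (false,o3); (true,o2)];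
[:: (false,o0); (true,o1); (false,o2); (true,o0); (false,o3); (true,o3)];
[:: (false,o0); (true,o1); (false,o2); (true,o2); (false,o3); (true,o0)];
[:: (false,o0); (true,o1); (false,o2); (true,o2); (false,o3); (true,o3)];
[:: (false,o0); (true,o1); (false,o2); (true,o3); (false,o3); (true,o0)];
[:: (false,o0); (true,o1); (false,o2); (true,o3); (false,o3); (true,o2)];
[:: (false,o0); (true,o2); (false,o2); (true,o0); (false,o3); (true,o1)];
[:: (false,o0); (true,o2); (false,o2); (true,o0); (false,o3); (true,o3)];
[:: (false,o0); (true,o2); (false,o2); (true,o1); (false,o3); (true,o0)];
[:: (false,o0); (true,o2); (false,o2); (true,o1); (false,o3); (true,o3)];
[:: (false,o0); (true,o2); (false,o2); (true,o3); (false,o3); (true,o0)];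
[:: (false,o0); (true,o2); (false,o2); (true,o3); (false,o3); (true,o1)];
[:: (false,o0); (true,o3); (false,o2); (true,o0); (false,o3); (true,o1)];
[:: (false,o0); (true,o3); (false,o2); (true,o0); (false,o3); (true,o2)];
[:: (false,o0); (true,o3); (false,o2); (true,o1); (false,o3); (true,o0)];
[:: (false,o0); (true,o3); (false,o2); (true,o1); (false,o3); (true,o2)];
[:: (false,o0); (true,o3); (false,o2); (true,o2); (false,o3); (true,o0)];
[:: (false,o0); (true,o3); (false,o2); (true,o2); (false,o3); (true,o1)];
[:: (false,o1); (true,o0); (false,o2); (true,o1); (false,o3); (true,o2)];
[:: (false,o1); (true,o0); (false,o2); (true,o1); (false,o3); (true,o3)];
[:: (false,o1); (true,o0); (false,o2); (true,o2); (false,o3); (true,o1)];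
[:: (false,o1); (true,o0); (false,o2); (true,o2); (false,o3); (true,o3)];
[:: (false,o1); (true,o0); (false,o2); (true,o3); (false,o3); (true,o1)];
[:: (false,o1); (true,o0); (false,o2); (true,o3); (false,o3); (true,o2)];
[:: (false,o1); (true,o1); (false,o2); (true,o0); (false,o3); (true,o2)];
[:: (false,o1); (true,o1); (false,o2); (true,o0); (false,o3); (true,o3)];
[:: (false,o1); (true,o1); (false,o2); (true,o2); (false,o3); (true,o0)];
[:: (false,o1); (true,o1); (false,o2); (true,o2); (false,o3); (true,o3)];
[:: (false,o1); (true,o1); (false,o2); (true,o3); (false,o3); (true,o0)];
[:: (false,o1); (true,o1); (false,o2); (true,o3); (false,o3); (true,o2)];
[:: (false,o1); (true,o2); (false,o2); (true,o0); (false,o3); (true,o1)];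
[:: (false,o1); (true,o2); (false,o2); (true,o0); (false,o3); (true,o3)];
[:: (false,o1); (true,o2); (false,o2); (true,o1); (false,o3); (true,o0)];
[:: (false,o1); (true,o2); (false,o2); (true,o1); (false,o3); (true,o3)];
[:: (false,o1); (true,o2); (false,o2); (true,o3); (false,o3); (true,o0)];
[:: (false,o1); (true,o2); (false,o2); (true,o3); (false,o3); (true,o1)];
[:: (false,o1); (true,o3); (false,o2); (true,o0); (false,o3); (true,o1)];
[:: (false,o1); (true,o3); (false,o2); (true,o0); (false,o3); (true,o2)];
[:: (false,o1); (true,o3); (false,o2); (true,o1); (false,o3); (true,o0)];
[:: (false,o1); (true,o3); (false,o2); (true,o1); (false,o3); (true,o2)];
[:: (false,o1); (true,o3); (false,o2); (true,o2); (false,o3); (true,o0)];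
[:: (false,o1); (true,o3); (false,o2); (true,o2); (false,o3); (true,o1)];
[:: (false,o0); (true,o0); (false,o1); (true,o1); (false,o2); (true,o2); (false,o3); (true,o3)];
[:: (false,o0); (true,o0); (false,o1); (true,o1); (false,o2); (true,o3); (false,o3); (true,o2)];
[:: (false,o0); (true,o0); (false,o1); (true,o2); (false,o2); (true,o1); (false,o3); (true,o3)];
[:: (false,o0); (true,o0); (false,o1); (true,o2); (false,o2); (true,o3); (false,o3); (true,o1)];
[:: (false,o0); (true,o0); (false,o1); (true,o3); (false,o2); (true,o1); (false,o3); (true,o2)];
[:: (false,o0); (true,o0); (false,o1); (true,o3); (false,o2); (true,o2); (false,o3); (true,o1)];
[:: (false,o0); (true,o1); (false,o1); (true,o0); (false,o2); (true,o2); (false,o3); (true,o3)];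
[:: (false,o0); (true,o1); (false,o1); (true,o0); (false,o2); (true,o3); (false,o3); (true,o2)];
[:: (false,o0); (true,o1); (false,o1); (true,o2); (false,o2); (true,o0); (false,o3); (true,o3)];
[:: (false,o0); (true,o1); (false,o1); (true,o2); (false,o2); (true,o3); (false,o3); (true,o0)];
[:: (false,o0); (true,o1); (false,o1); (true,o3); (false,o2); (true,o0); (false,o3); (true,o2)];
[:: (false,o0); (true,o1); (false,o1); (true,o3); (false,o2); (true,o2); (false,o3); (true,o0)];
[:: (false,o0); (true,o2); (false,o1); (true,o0); (false,o2); (true,o1); (false,o3); (true,o3)];
[:: (false,o0); (true,o2); (false,o1); (true,o0); (false,o2); (true,o3); (false,o3); (true,o1)];
[:: (false,o0); (true,o2); (false,o1); (true,o1); (false,o2); (true,o0); (false,o3); (true,o3)];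
[:: (false,o0); (true,o2); (false,o1); (true,o1); (false,o2); (true,o3); (false,o3); (true,o0)];
[:: (false,o0); (true,o2); (false,o1); (true,o3); (false,o2); (true,o0); (false,o3); (true,o1)];
[:: (false,o0); (true,o2); (false,o1); (true,o3); (false,o2); (true,o1); (false,o3); (true,o0)];
[:: (false,o0); (true,o3); (false,o1); (true,o0); (false,o2); (true,o1); (false,o3); (true,o2)];
[:: (false,o0); (true,o3); (false,o1); (true,o0); (false,o2); (true,o2); (false,o3); (true,o1)];
[:: (false,o0); (true,o3); (false,o1); (true,o1); (false,o2); (true,o0); (false,o3); (true,o2)];
[:: (false,o0); (true,o3); (false,o1); (true,o1); (false,o2); (true,o2); (false,o3); (true,o0)];
[:: (false,o0); (true,o3); (false,o1); (true,o2); (false,o2); (true,o0); (false,o3); (true,o1)];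
[:: (false,o0); (true,o3); (false,o1); (true,o2); (false,o2); (true,o1); (false,o3); (true,o0)];
[:: (false,o0); (true,o0); (false,o1); (true,o1); (false,o3); (true,o2); (false,o2); (true,o3)];
[:: (false,o0); (true,o0); (false,o1); (true,o1); (false,o3); (true,o3); (false,o2); (true,o2)];
[:: (false,o0); (true,o0); (false,o1); (true,o2); (false,o3); (true,o1); (false,o2); (true,o3)];
[:: (false,o0); (true,o0); (false,o1); (true,o2); (false,o3); (true,o3); (false,o2); (true,o1)];
[:: (false,o0); (true,o0); (false,o1); (true,o3); (false,o3); (true,o1); (false,o2); (true,o2)];
[:: (false,o0); (true,o0); (false,o1); (true,o3); (false,o3); (true,o2); (false,o2); (true,o1)];
[:: (false,o0); (true,o1); (false,o1); (true,o0); (false,o3); (true,o2); (false,o2); (true,o3)];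
[:: (false,o0); (true,o1); (false,o1); (true,o0); (false,o3); (true,o3); (false,o2); (true,o2)];
[:: (false,o0); (true,o1); (false,o1); (true,o2); (false,o3); (true,o0); (false,o2); (true,o3)];
[:: (false,o0); (true,o1); (false,o1); (true,o2); (false,o3); (true,o3); (false,o2); (true,o0)];
[:: (false,o0); (true,o1); (false,o1); (true,o3); (false,o3); (true,o0); (false,o2); (true,o2)];
[:: (false,o0); (true,o1); (false,o1); (true,o3); (false,o3); (true,o2); (false,o2); (true,o0)];
[:: (false,o0); (true,o2); (false,o1); (true,o0); (false,o3); (true,o1); (false,o2); (true,o3)];
[:: (false,o0); (true,o2); (false,o1); (true,o0); (false,o3); (true,o3); (false,o2); (true,o1)];
[:: (false,o0); (true,o2); (false,o1); (true,o1); (false,o3); (true,o0); (false,o2); (true,o3)];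
[:: (false,o0); (true,o2); (false,o1); (true,o1); (false,o3); (true,o3); (false,o2); (true,o0)];
[:: (false,o0); (true,o2); (false,o1); (true,o3); (false,o3); (true,o0); (false,o2); (true,o1)];
[:: (false,o0); (true,o2); (false,o1); (true,o3); (false,o3); (true,o1); (false,o2); (true,o0)];
[:: (false,o0); (true,o3); (false,o1); (true,o0); (false,o3); (true,o1); (false,o2); (true,o2)];
[:: (false,o0); (true,o3); (false,o1); (true,o0); (false,o3); (true,o2); (false,o2); (true,o1)];
[:: (false,o0); (true,o3); (false,o1); (true,o1); (false,o3); (true,o0); (false,o2); (true,o2)];
[:: (false,o0); (true,o3); (false,o1); (true,o1); (false,o3); (true,o2); (false,o2); (true,o0)];
[:: (false,o0); (true,o3); (false,o1); (true,o2); (false,o3); (true,o0); (false,o2); (true,o1)];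
[:: (false,o0); (true,o3); (false,o1); (true,o2); (false,o3); (true,o1); (false,o2); (true,o0)];
[:: (false,o0); (true,o0); (false,o2); (true,o1); (false,o1); (true,o2); (false,o3); (true,o3)];
[:: (false,o0); (true,o0); (false,o2); (true,o1); (false,o1); (true,o3); (false,o3); (true,o2)];
[:: (false,o0); (true,o0); (false,o2); (true,o2); (false,o1); (true,o1); (false,o3); (true,o3)];
[:: (false,o0); (true,o0); (false,o2); (true,o2); (false,o1); (true,o3); (false,o3); (true,o1)];
[:: (false,o0); (true,o0); (false,o2); (true,o3); (false,o1); (true,o1); (false,o3); (true,o2)];
[:: (false,o0); (true,o0); (false,o2); (true,o3); (false,o1); (true,o2); (false,o3); (true,o1)];
[:: (false,o0); (true,o1); (false,o2); (true,o0); (false,o1); (true,o2); (false,o3); (true,o3)];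
[:: (false,o0); (true,o1); (false,o2); (true,o0); (false,o1); (true,o3); (false,o3); (true,o2)];
[:: (false,o0); (true,o1); (false,o2); (true,o2); (false,o1); (true,o0); (false,o3); (true,o3)];
[:: (false,o0); (true,o1); (false,o2); (true,o2); (false,o1); (true,o3); (false,o3); (true,o0)];
[:: (false,o0); (true,o1); (false,o2); (true,o3); (false,o1); (true,o0); (false,o3); (true,o2)];
[:: (false,o0); (true,o1); (false,o2); (true,o3); (false,o1); (true,o2); (false,o3); (true,o0)];
[:: (false,o0); (true,o2); (false,o2); (true,o0); (false,o1); (true,o1); (false,o3); (true,o3)];
[:: (false,o0); (true,o2); (false,o2); (true,o0); (false,o1); (true,o3); (false,o3); (true,o1)];
[:: (false,o0); (true,o2); (false,o2); (true,o1); (false,o1); (true,o0); (false,o3); (true,o3)];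
[:: (false,o0); (true,o2); (false,o2); (true,o1); (false,o1); (true,o3); (false,o3); (true,o0)];
[:: (false,o0); (true,o2); (false,o2); (true,o3); (false,o1); (true,o0); (false,o3); (true,o1)];
[:: (false,o0); (true,o2); (false,o2); (true,o3); (false,o1); (true,o1); (false,o3); (true,o0)];
[:: (false,o0); (true,o3); (false,o2); (true,o0); (false,o1); (true,o1); (false,o3); (true,o2)];
[:: (false,o0); (true,o3); (false,o2); (true,o0); (false,o1); (true,o2); (false,o3); (true,o1)];
[:: (false,o0); (true,o3); (false,o2); (true,o1); (false,o1); (true,o0); (false,o3); (true,o2)];
[:: (false,o0); (true,o3); (false,o2); (true,o1); (false,o1); (true,o2); (false,o3); (true,o0)];
[:: (false,o0); (true,o3); (false,o2); (true,o2); (false,o1); (true,o0); (false,o3); (true,o1)];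
[:: (false,o0); (true,o3); (false,o2); (true,o2); (false,o1); (true,o1); (false,o3); (true,o0)]].

Definition checkT (g : 'I_4 -> 'I_4 -> bool) : bool :=
  if hasL (fun t => okW (eW g true) t) cands then true else hasL (fun t => okW (eW g false) t) cands.

Definition decode (bits : seq bool) : 'I_4 -> 'I_4 -> bool :=
  fun i j => nth false bits (4 * i + j).

Fixpoint allb (n : nat) (P : seq bool -> bool) : bool :=
  match n with
  | 0 => P [::]
  | n.+1 => allb n (fun s => P (true :: s)) && allb n (fun s => P (false :: s))
  end.

Lemma allbP n P : allb n P -> forall s, size s = n -> P s.
Proof.
elim: n P => [|n IH] P /=; first by move=> H [|//].
move=> /andP[H1 H2] [//|[] s] /= [] Hs; [exact: (IH _ H1) | exact: (IH _ H2)].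
Qed.




Lemma allcheck : allb 16 (fun bits => checkT (decode bits)).
Proof. vm_compute. reflexivity. Qed.

Definition mkbits (g : 'I_4 -> 'I_4 -> bool) : seq bool :=
  map (fun n => g (inord (n %/ 4)) (inord (n %% 4))) (iota 0 16).

Lemma decode_mk g : decode (mkbits g) = g.
Proof.
apply: functional_extensionality => i; apply: functional_extensionality => j.
have Hi := ltn_ord i; have Hj := ltn_ord j.
rewrite /decode /mkbits (nth_map 0); last by rewrite size_iota; lia.
rewrite nth_iota; last by lia.
have -> : (0 + (4 * i + j)) %/ 4 = i by lia.
have -> : (0 + (4 * i + j)) %% 4 = j by lia.
by rewrite !inord_val.
Qed.

Definition tr (c : 'I_3) (w : W) : V := ((c, w.1), w.2).

Lemma tr_inj c : injective (tr c).
Proof. by move=> [a i] [b j] [-> ->]. Qed.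

Lemma adjc_tr col k c a b : adjc col k (tr c a) (tr c b) = eW (col c) k a b.
Proof. by rewrite /adjc /H_adj /edge_color /eW /= eqxx. Qed.

Lemma copy_ok (col : coloring) (c : 'I_3) : exists k t, okW (eW (col c) k) t.
Proof.
have := @allbP 16 _ allcheck (mkbits (col c)).
rewrite size_map size_iota decode_mk /checkT => /(_ erefl).
case E : (hasL _ _).
  move: E; rewrite hasLE => /hasP[t _ Ht]; by exists true, t.
rewrite hasLE => /hasP[t _ Ht]; by exists false, t.
Qed.

Lemma transfer col c k t : okW (eW (col c) k) t ->
  (is_cycle (adjc col k) (map (tr c) t) /\ chordless (adjc col k) (map (tr c) t))
  /\ all (fun v => copy_of v == c) (map (tr c) t).
Proof.
rewrite /okW cycleLE.
case Hc : (cycle _ _) => //; case Hs : (2 < size t) => //; case Hu : (uniq t) => // Hch.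
split; last by rewrite all_map; apply/allP => x _; rewrite /= eqxx.
split.
  split; first by rewrite size_map.
  split; first by rewrite (map_inj_uniq (@tr_inj c)).
  rewrite cycle_map; apply: etrans Hc; apply: eq_cycle => a b /=; exact: adjc_tr.
move=> i j; rewrite size_map => Hi Hj.
rewrite (nth_map w0) // (nth_map w0) //.
rewrite adjc_tr.
move: Hch => /allP /(_ i) ; rewrite mem_iota add0n => /(_ Hi) /allP /(_ j).
rewrite mem_iota add0n => /(_ Hj) /implyP H /H /orP[] /eqP ->; by [left|right].
Qed.

Theorem lemma5 (col : coloring) :
  exists (k : bool) (s1 s2 : seq V) (c1 c2 : 'I_3),
    [/\ is_cycle (adjc col k) s1 /\ chordless (adjc col k) s1,
        is_cycle (adjc col k) s2 /\ chordless (adjc col k) s2,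
        [disjoint s1 & s2],
        c1 != c2 &
        all (fun v => copy_of v == c1) s1 /\ all (fun v => copy_of v == c2) s2].
Proof.
have key : forall k c1 c2 t1 t2, c1 != c2 ->
   okW (eW (col c1) k) t1 -> okW (eW (col c2) k) t2 ->
  exists (k : bool) (s1 s2 : seq V) (c1 c2 : 'I_3),
    [/\ is_cycle (adjc col k) s1 /\ chordless (adjc col k) s1,
        is_cycle (adjc col k) s2 /\ chordless (adjc col k) s2,
        [disjoint s1 & s2],
        c1 != c2 &
        all (fun v => copy_of v == c1) s1 /\ all (fun v => copy_of v == c2) s2].
  move=> k c1 c2 t1 t2 Hne /transfer[H1 A1] /transfer[H2 A2].
  exists k, (map (tr c1) t1), (map (tr c2) t2), c1, c2; split => //.
  apply/pred0P => v /=; apply/negbTE/negP => /andP[/(allP A1) /eqP e1 /(allP A2) /eqP e2].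
  by move: Hne; rewrite -e1 -e2 eqxx.
have [k0 [t0 H0]] := copy_ok col (@Ordinal 3 0 isT).
have [k1 [t1 H1]] := copy_ok col (@Ordinal 3 1 isT).
have [k2 [t2 H2]] := copy_ok col (@Ordinal 3 2 isT).
case E01 : (k0 == k1).
  move/eqP: E01 => E; rewrite -E in H1; exact: key H0 H1.
case E02 : (k0 == k2).
  move/eqP: E02 => E; rewrite -E in H2; exact: key H0 H2.
have E : k1 = k2 by destruct k0, k1, k2.
rewrite -E in H2; exact: key H1 H2.
Qed.
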